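(* Let $G$ and $H$ be Polish groups such that $G$ has the Rosendal property. Let $\varphi:G\to H$ be a continuous homomorphism with $\varphi(G)\neq\{1_H\}$. Let $E$ be an equivalence relation on $G$ such that for every infinite set $I\subseteq\mathbb{N}$ the set $$Q_I=\{g\in G:\text{there is a strictly increasing sequence }(k_n)_{n\ge1}\text{ in } I \text{ with } \varphi(g)^{k_n}\to 1_H\}$$ is $E$-invariant. Then every equivalence class of $E$ that is dense in $G$ is meager. In particular, $E$ does not have a comeager class.
   Context: A Polish group $G$ has the Rosendal property if for every infinite set $I\subseteq\mathbb{N}$ and every neighbourhood $V$ of $1$ in $G$, the set $\{g\in G:\text{there is } n\in I \text{ with } g^n\in V\}$ is dense in $G$. A set is $E$-invariant if it is a union of $E$-classes. *)

(* Defs.v *)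
From mathcomp Require Import all_boot all_order all_algebra.
From mathcomp Require Import all_classical all_reals all_analysis.
From mathcomp Require Import Rstruct Rstruct_topology.
Set Implicit Arguments. Unset Strict Implicit. Unset Printing Implicit Defensive.
Import Order.TTheory GRing.Theory Num.Theory.
Local Open Scope classical_set_scope.
Local Open Scope ring_scope.

Record TopGroup (T : topologicalType) := {
  gmul : T -> T -> T;
  ginv : T -> T;
  gone : T;
  gmulA : forall x y z, gmul x (gmul y z) = gmul (gmul x y) z;
  gmul1 : forall x, gmul gone x = x;
  gmulV : forall x, gmul (ginv x) x = gone;
  gmul_cont : continuous (fun p : T * T => gmul p.1 p.2);
  ginv_cont : continuous ginv }.

Definition gpow (T : topologicalType) (G : TopGroup T) (g : T) (n : nat) : T :=
  iter n (gmul G g) (gone G).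

Definition is_metric (T : Type) (d : T -> T -> Rdefinitions.R) : Prop :=
  (forall x y, 0 <= d x y) /\
  (forall x y, d x y = 0 <-> x = y) /\
  (forall x y, d x y = d y x) /\
  (forall x y z, d x z <= d x y + d y z).

Definition metric_compatible (T : topologicalType) (d : T -> T -> Rdefinitions.R) : Prop :=
  forall (x : T) (A : set T),
    nbhs x A <-> exists2 e : Rdefinitions.R, 0 < e & [set y | d x y < e] `<=` A.

Definition metric_complete (T : topologicalType) (d : T -> T -> Rdefinitions.R) : Prop :=
  forall u : nat -> T,
    (forall e : Rdefinitions.R, 0 < e ->
       exists N : nat, forall m n : nat, (N <= m)%N -> (N <= n)%N -> d (u m) (u n) < e) ->
    exists x : T, u @ \oo --> x.

Definition separable (T : topologicalType) : Prop :=
  exists D : set T, countable D /\ dense D.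

Definition completely_metrizable (T : topologicalType) : Prop :=
  exists d : T -> T -> Rdefinitions.R,
    [/\ is_metric d, metric_compatible d & metric_complete d].

Definition polish (T : topologicalType) : Prop :=
  separable T /\ completely_metrizable T.

Definition nowhere_dense (T : topologicalType) (A : set T) : Prop :=
  interior (closure A) = set0.

Definition meager (T : topologicalType) (A : set T) : Prop :=
  exists F : nat -> set T, (forall n, nowhere_dense (F n)) /\ A `<=` \bigcup_n F n.

Definition comeager (T : topologicalType) (A : set T) : Prop := meager (~` A).

Definition rosendal (T : topologicalType) (G : TopGroup T) : Prop :=
  forall (I : set nat), infinite_set I ->
  forall (V : set T), nbhs (gone G) V ->
    dense [set g : T | exists2 n : nat, I n & V (gpow G g n)].

Definition is_hom (T U : topologicalType) (G : TopGroup T) (H : TopGroup U)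
  (phi : T -> U) : Prop :=
  forall x y, phi (gmul G x y) = gmul H (phi x) (phi y).

Definition is_equivalence (T : Type) (E : T -> T -> Prop) : Prop :=
  (forall x, E x x) /\ (forall x y, E x y -> E y x) /\
  (forall x y z, E x y -> E y z -> E x z).

Definition eclass (T : Type) (E : T -> T -> Prop) (x : T) : set T := [set y | E x y].

Definition E_invariant (T : Type) (E : T -> T -> Prop) (A : set T) : Prop :=
  forall x y, E x y -> A x -> A y.

Definition QI (T U : topologicalType) (H : TopGroup U) (phi : T -> U) (I : set nat) : set T :=
  [set g | exists k : nat -> nat,
     [/\ (forall n, (k n < k n.+1)%N), (forall n, I (k n)) &
         (fun n => gpow H (phi g) (k n)) @ \oo --> gone H]].

(* Main.v *)
Require Import Defs.
From mathcomp Require Import all_boot all_order all_algebra.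
From mathcomp Require Import all_classical all_reals all_analysis.
From mathcomp Require Import Rstruct Rstruct_topology lra.
Set Implicit Arguments. Unset Strict Implicit. Unset Printing Implicit Defensive.
Import Order.TTheory GRing.Theory Num.Theory.
Local Open Scope classical_set_scope.
Local Open Scope ring_scope.

Section Grp.
Variables (T : topologicalType) (G : TopGroup T).
Lemma idem1 x : gmul G x x = x -> x = gone G.
Proof.
move=> h; have: gmul G (ginv G x) (gmul G x x) = gmul G (ginv G x) x by rewrite h.
by rewrite gmulA gmulV gmul1.
Qed.
Lemma mulgV x : gmul G x (ginv G x) = gone G.
Proof.
apply: idem1; rewrite -gmulA [gmul G (ginv G x) _]gmulA gmulV gmul1 //.
Qed.
Lemma mulg1 x : gmul G x (gone G) = x.
Proof. by rewrite -(gmulV G x) gmulA mulgV gmul1. Qed.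
End Grp.

Section Met.
Variables (T : topologicalType) (d : T -> T -> Rdefinitions.R).
Hypotheses (md : is_metric d) (cd : metric_compatible d).
Lemma ball_nbhs x e : 0 < e -> nbhs x [set y | d x y < e].
Proof. by move=> e0; apply/cd; exists e. Qed.
Lemma nbhs_ball x A : nbhs x A -> exists2 e, 0 < e & [set y | d x y < e] `<=` A.
Proof. by move/cd. Qed.
Lemma ball_nbhs_in x y e : d x y < e -> nbhs y [set z | d x z < e].
Proof.
move=> h; apply/cd; exists (e - d x y); first by rewrite subr_gt0.
move=> z /= hz; case: md => _ [_ [_ tri]]; have := tri x y z; lra.
Qed.
Lemma cvg_ev (u : nat -> T) (x : T) (A : set T) : u @ \oo --> x -> nbhs x A ->
  exists N, forall n, (N <= n)%N -> A (u n).
Proof. move=> cu nA; case: (cu _ nA) => N _ HN; exists N => n hn; exact: HN. Qed.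
Lemma ev_cvg (u : nat -> T) (x : T) : (forall A : set T, nbhs x A -> exists N, forall n, (N <= n)%N -> A (u n)) -> u @ \oo --> x.
Proof. move=> h A nA; case: (h _ nA) => N HN; exists N => // n; exact: HN. Qed.
End Met.

Lemma arch (eps : Rdefinitions.R) : 0 < eps ->
  exists N : nat, forall n, (N <= n)%N -> 2 / (n.+1)%:R < eps.
Proof.
move=> e0; have h0 : 0 <= 2 / eps by rewrite divr_ge0 // ltW.
have := archi_boundP h0; set N := Num.bound _ => hN.
exists N => n hn.
have hn' : (N%:R : Rdefinitions.R) <= n.+1%:R by rewrite ler_nat; apply: leq_trans hn _.
rewrite ltr_pdivrMr ?ltr0n //.
rewrite ltr_pdivrMr // in hN.
nra.
Qed.

Fixpoint seqf (A : Type) (a0 : A) (f : nat -> A -> A) (n : nat) : A :=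
  match n with 0 => a0 | m.+1 => f m (seqf a0 f m) end.

Section Baire.
Variables (T : topologicalType) (d : T -> T -> Rdefinitions.R).
Hypotheses (md : is_metric d) (cd : metric_compatible d) (cmp : metric_complete d).

Let tri x y z : d x z <= d x y + d y z.
Proof. by case: md => _ [_ [_ h]]. Qed.
Let sym x y : d x y = d y x.
Proof. by case: md => _ [_ [h _]]. Qed.
Let d0 x : d x x = 0.
Proof. by case: md => _ [h _]; apply/h. Qed.

Lemma KL (F : set T) y e : nowhere_dense F -> 0 < e ->
  exists z r, [/\ 0 < r, [set w | d z w < r] `<=` [set w | d y w < e] &
     [set w | d z w < r] `&` F = set0].
Proof.
move=> nF e0; apply: contrapT => H.
have sub : [set w | d y w < e] `<=` closure F.
  move=> w /= hw B /(nbhs_ball cd) [e' e'0 hB].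
  pose r := Num.min e' (e - d y w).
  have r0 : 0 < r by rewrite lt_min e'0 subr_gt0.
  have : ~ ([set v | d w v < r] `&` F = set0).
    move=> h; apply: H; exists w, r; split => //.
    move=> v /= hv; move: hv; rewrite lt_min => /andP[_ hv].
    have := tri y w v; lra.
  move/eqP/set0P => [v [hv Fv]]; exists v; split => //; apply: hB.
  by move: hv; rewrite /= lt_min => /andP[].
have : interior (closure F) y by apply: filterS sub (ball_nbhs cd _ e0).
by rewrite nF.
Qed.

Lemma baire (F : nat -> set T) x0 e0 : (forall n, nowhere_dense (F n)) -> 0 < e0 ->
  ~ ([set w | d x0 w < e0] `<=` \bigcup_n F n).
Proof.
move=> nF e00 hsub.
have step : forall np : nat * (T * Rdefinitions.R), exists q : T * Rdefinitions.R,
   0 < np.2.2 -> [/\ 0 < q.2, q.2 <= 1 / (np.1.+1)%:R,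
     [set w | d q.1 w < 2 * q.2] `<=` [set w | d np.2.1 w < np.2.2] &
     [set w | d q.1 w < 2 * q.2] `&` F np.1 = set0].
  move=> [n [y e]] /=.
  case: (boolp.pselect (0 < e)) => he; last by exists (y, e).
  have [z [r [r0 h1 h2]]] := KL y (nF n) he.
  have q0 : 0 < 1 / (n.+1)%:R :> Rdefinitions.R by rewrite divr_gt0 ?ltr0n.
  move: q0; set q := 1 / _ => q0.
  pose s := Num.min r q.
  have s0 : 0 < s by rewrite lt_min r0 q0.
  have sq : s <= q by rewrite ge_min lexx orbT.
  have sr : s <= r by rewrite ge_min lexx.
  clearbody s.
  exists (z, s / 2) => _ /=; split.
  - by rewrite divr_gt0.
  - lra.
  - move=> w /= hw; apply: h1 => /=; lra.
  - rewrite -subset0 => w [/= hw Fw].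
    have : ([set w | d z w < r] `&` F n) w.
      split => //=; lra.
    by rewrite h2.
have [f hf] := boolp.choice step.
pose s := seqf (x0, e0) (fun n p => f (n, p)).
pose x n := (s n).1. pose r n := (s n).2.
have P1 : forall n, 0 < r n.
  elim => [//|n IH]; by case: (hf (n, s n) IH).
have P2 : forall n, [/\ r n.+1 <= 1 / (n.+1)%:R,
     [set w | d (x n.+1) w < 2 * r n.+1] `<=` [set w | d (x n) w < r n] &
     [set w | d (x n.+1) w < 2 * r n.+1] `&` F n = set0].
  by move=> n; case: (hf (n, s n) (P1 n)).
have P3 : forall n k, [set w | d (x (n + k)%N) w < r (n + k)%N] `<=` [set w | d (x n) w < r n].
  move=> n; elim => [|k IH]; first by rewrite addn0.
  move=> w /= hw; apply: IH; rewrite addnS in hw; case: (P2 (n + k)%N) => _ h _; apply: h => /=.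
  have := P1 (n + k).+1; lra.
have P4 : forall n m, (n <= m)%N -> d (x n) (x m) < r n.
  move=> n m nm; rewrite -(subnKC nm); apply: (P3 n (m - n)%N) => /=; rewrite d0; exact: P1.
have cauchy : forall eps : Rdefinitions.R, 0 < eps -> exists N, forall m k, (N <= m)%N -> (N <= k)%N -> d (x m) (x k) < eps.
  move=> eps eps0; have [N HN] := arch eps0.
  exists N.+1 => m k hm hk.
  have h1 := P4 _ _ hm; have h2 := P4 _ _ hk.
  have := tri (x m) (x N.+1) (x k); rewrite (sym (x m) (x N.+1)).
  case: (P2 N) => h3 _ _.
  have he : 2 * r N.+1 < eps.
    apply: le_lt_trans (HN N (leqnn N)).
    by rewrite ler_pM2l // -div1r.
  lra.
have [l hl] := cmp cauchy.
have inb : forall n, d (x n.+1) l < 2 * r n.+1.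
  move=> n; have [M HM] := cvg_ev hl (ball_nbhs cd l (P1 n.+1)).
  have h1 := HM (maxn M n.+1) (leq_maxl _ _).
  have h2 := P4 n.+1 (maxn M n.+1) (leq_maxr _ _).
  have := tri (x n.+1) (x (maxn M n.+1)) l; rewrite (sym (x (maxn M n.+1)) l).
  move: h1 => /= h1; lra.
have : [set w | d x0 w < e0] l.
  by case: (P2 0%N) => _ h _; apply: h; exact: inb.
move/hsub => [n _ Fn].
case: (P2 n) => _ _ h.
have : ([set w | d (x n.+1) w < 2 * r n.+1] `&` F n) l by split => //; exact: inb.
by rewrite h.
Qed.
End Baire.

Lemma fin_bound (A : set nat) : finite_set A -> exists N, forall n, (N <= n)%N -> ~ A n.
Proof.
move/finite_fsetP => [X ->]; exists (\max_(x <- finmap.enum_fset X) x).+1 => n hn hX.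
have : (n <= \max_(x <- finmap.enum_fset X) x)%N by apply: (@leq_bigmax_seq _ (finmap.enum_fset X) xpredT (fun i => i) n).
by rewrite leqNgt hn.
Qed.

Lemma gpowS (T : topologicalType) (G : TopGroup T) g n : gpow G g n.+1 = gmul G g (gpow G g n).
Proof. by []. Qed.

Lemma cont_pow (T : topologicalType) (G : TopGroup T) n : continuous (fun g => gpow G g n).
Proof.
elim: n => [|n IH] x; first exact: cvg_cst.
apply: (cvg_comp2 cvg_id (IH x)); move=> P hP; exact (@gmul_cont _ G (x, gpow G x n) P hP).
Qed.

Lemma lmul_cont (T : topologicalType) (G : TopGroup T) a : continuous (fun x => gmul G a x).
Proof. move=> y; exact: (cvg_comp2 (cvg_cst a) cvg_id (@gmul_cont _ G (a, y))). Qed.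

Section Main.
Variables (TG TH : topologicalType) (G : TopGroup TG) (H : TopGroup TH) (phi : TG -> TH).
Hypotheses (hom_phi : is_hom G H phi) (cont_phi : continuous phi).
Variable dH : TH -> TH -> Rdefinitions.R.
Hypotheses (mdH : is_metric dH) (cdH : metric_compatible dH).

Let tri x y z : dH x z <= dH x y + dH y z.
Proof. by case: mdH => _ [_ [_ h]]. Qed.
Let sym x y : dH x y = dH y x.
Proof. by case: mdH => _ [_ [h _]]. Qed.

Lemma phi1 : phi (gone G) = gone H.
Proof. by apply: idem1; rewrite -hom_phi gmul1. Qed.

Lemma phi_pow g n : gpow H (phi g) n = phi (gpow G g n).
Proof. by elim: n => [|n IH]; [rewrite /= phi1 | rewrite !gpowS hom_phi IH]. Qed.

Definition Oset (I : set nat) (m : nat) : set TG :=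
  [set g | exists2 n, (I `\` `I_m) n & dH (gone H) (phi (gpow G g n)) < 1 / m.+1%:R].

Lemma O_open I m : open (Oset I m).
Proof.
rewrite openE => g [n In hn].
have nb1 : nbhs (gpow G g n) [set y | dH (gone H) (phi y) < 1 / m.+1%:R] :=
  cont_phi (ball_nbhs_in mdH cdH hn).
have nb : nbhs g [set h | dH (gone H) (phi (gpow G h n)) < 1 / m.+1%:R] :=
  @cont_pow _ G n g _ nb1.
by apply: filterS nb => h /= hh; exists n.
Qed.

Lemma O_dense I m : rosendal G -> infinite_set I -> dense (Oset I m).
Proof.
move=> rosG infI; have infI' := infinite_setD infI (finite_II m).
have B : nbhs (phi (gone G)) [set y | dH (gone H) y < 1 / m.+1%:R].
  rewrite phi1; apply: (ball_nbhs cdH); by rewrite divr_gt0 ?ltr0n.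
have V : nbhs (gone G) [set g | dH (gone H) (phi g) < 1 / m.+1%:R] := cont_phi B.
have D := rosG _ infI' _ V.
move=> W W0 oW; have [x [Wx [n In Vx]]] := D W W0 oW.
by exists x; split => //; exists n.
Qed.

Lemma nd_compl (O : set TG) : open O -> dense O -> nowhere_dense (~` O).
Proof.
move=> oO dO; rewrite /nowhere_dense -subset0 => x hx.
have [y [Wy Oy]] := dO _ (ex_intro _ x hx) (@open_interior _ _).
have : closure (~` O) y := nbhs_singleton Wy.
move=> /(_ O) []; first by move: oO; rewrite openE => /(_ y Oy).
by move=> z [].
Qed.

Lemma QI_big I g : (forall m, Oset I m g) -> QI H phi I g.
Proof.
move=> hO.
have hO' : forall m, exists n, (I n /\ (m <= n)%N) /\ dH (gone H) (phi (gpow G g n)) < 1 / m.+1%:R.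
  move=> m; case: (hO m) => n [In nlt] hd; exists n; split => //; split => //.
  by move/negP: nlt; rewrite -leqNgt.
have [nf hnf] := boolp.choice hO'.
pose k := seqf (nf 0%N) (fun _ p => nf p.+1).
have hk : forall j, exists m, (j <= m)%N /\ k j = nf m.
  elim => [|j [m [jm km]]]; first by exists 0%N.
  exists (k j).+1; split => //.
  case: (hnf m) => [[_ mn] _].
  by rewrite ltnS km; apply: leq_trans mn.
exists k; split.
- move=> n /=; by case: (hnf (k n).+1) => [[_ h] _].
- case => [|n] /=; first by case: (hnf 0%N) => [[h _] _].
  by case: (hnf (k n).+1) => [[h _] _].
- apply: ev_cvg => A /(nbhs_ball cdH) [e e0 hA].
  have [N HN] := arch e0.
  exists N => j hj; apply: hA => /=.
  have [m [jm ->]] := hk j.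
  rewrite phi_pow; case: (hnf m) => _ hd.
  apply: lt_trans hd _; apply: le_lt_trans (HN m (leq_trans hj jm)).
  by rewrite ler_pM2r ?invr_gt0 ?ltr0n // ler1n.
Qed.

Lemma pow_to_one g : (forall I, infinite_set I -> QI H phi I g) -> phi g = gone H.
Proof.
move=> hq; apply: contrapT => ne.
set a := phi g.
have conv : (fun n => gpow H a n) @ \oo --> gone H.
  apply: ev_cvg => A /(nbhs_ball cdH) [e e0 hA].
  have : ~ infinite_set [set n | ~ dH (gone H) (gpow H a n) < e].
    move=> inf; have [k [_ Ik ck]] := hq _ inf.
    have [N HN] := cvg_ev ck (ball_nbhs cdH _ e0).
    exact: (Ik N (HN N (leqnn N))).
  move/contrapT/fin_bound => [N HN]; exists N => n /HN hn; apply: hA => /=; exact: contrapT.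
have conv2 : (fun n => gpow H a n.+1) @ \oo --> a.
  apply: ev_cvg => A nA.
  have nA' : nbhs (gmul H a (gone H)) A by rewrite mulg1.
  have nB : nbhs (gone H) [set x | A (gmul H a x)] := @lmul_cont _ H a (gone H) _ nA'.
  have [N HN] := cvg_ev conv nB; by exists N => n /HN.
have conv3 : (fun n => gpow H a n.+1) @ \oo --> gone H.
  apply: ev_cvg => A nA; have [N HN] := cvg_ev conv nA.
  by exists N => n hn; apply: HN; apply: leqW.
have d0 : 0 < dH (gone H) a.
  case: mdH => h0 [heq _]; rewrite lt_def h0 andbT; apply/eqP => /heq; by move/esym.
have h2 : 0 < dH (gone H) a / 2 by rewrite divr_gt0.
have [N1 H1] := cvg_ev conv2 (ball_nbhs cdH _ h2).
have [N2 H2] := cvg_ev conv3 (ball_nbhs cdH _ h2).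
have b1 := H1 (maxn N1 N2) (leq_maxl _ _).
have b2 := H2 (maxn N1 N2) (leq_maxr _ _).
move: b1 b2 => /=; rewrite -!gpowS => b1 b2.
have := tri (gone H) (gpow H a (maxn N1 N2).+1) a.
rewrite (sym (gpow H a _) a); lra.
Qed.
End Main.

Theorem lemma4p1 (TG TH : topologicalType) (G : TopGroup TG) (H : TopGroup TH)
  (polG : polish TG) (polH : polish TH) (rosG : rosendal G)
  (phi : TG -> TH) (hom_phi : is_hom G H phi) (cont_phi : continuous phi)
  (nontriv : exists g : TG, phi g <> gone H)
  (E : TG -> TG -> Prop) (eqE : is_equivalence E)
  (hQ : forall I : set nat, infinite_set I -> E_invariant E (QI H phi I)) :
  (forall x : TG, dense (eclass E x) -> meager (eclass E x)) /\
  ~ (exists x : TG, comeager (eclass E x)).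
Proof.
case: polH => _ [dH [mdH cdH _]].
case: polG => _ [dG [mdG cdG cmpG]].
case: eqE => Erefl [Esym Etrans].
have part1 : forall x : TG, dense (eclass E x) -> meager (eclass E x).
  move=> x dC; apply: contrapT => nm.
  have allQ : forall g, eclass E x g -> forall I, infinite_set I -> QI H phi I g.
    move=> g Cg I infI.
    have : ~ (eclass E x `&` QI H phi I = set0).
      move=> h0; apply: nm; exists (fun m => ~` Oset G H phi dH I m); split.
        move=> m; apply: nd_compl; [exact: O_open | exact: O_dense].
      move=> c Cc; apply: contrapT => hc.
      have : (eclass E x `&` QI H phi I) c.
        split => //; apply: (QI_big hom_phi cdH) => m; apply: contrapT => hm.
        by apply: hc; exists m.
      by rewrite h0.
    move/eqP/set0P => [c [Cc Qc]].
    exact: (hQ I infI c g (Etrans _ _ _ (Esym _ _ Cc) Cg) Qc).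
  have [g0 ng0] := nontriv.
  have [h0 [heq [hsym _]]] := mdH.
  have d0 : 0 < dH (phi g0) (gone H).
    by rewrite lt_def h0 andbT; apply/eqP => /heq.
  pose W := [set y | dH (phi g0) (phi y) < dH (phi g0) (gone H)].
  have oW : open W.
    rewrite openE => y hy.
    have nb : nbhs (phi y) [set z | dH (phi g0) z < dH (phi g0) (gone H)] :=
      ball_nbhs_in mdH cdH hy.
    have nW : nbhs y W := @cont_phi y _ nb. exact: nW.
  have W0 : W !=set0.
    by exists g0; rewrite /W /= (proj2 (heq _ _) erefl).
  have [y [Wy Cy]] := dC W W0 oW.
  move: Wy; rewrite /W /= (pow_to_one mdH cdH (allQ y Cy)).
  by rewrite ltxx.
split => // -[x [F [nF hF]]].
have Baire := baire mdG cdG cmpG.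
have [dC|ndC] := boolp.pselect (dense (eclass E x)).
  have [F' [nF' hF']] := part1 x dC.
  pose K n := if odd n then F' n./2 else F n./2.
  apply: (Baire K (gone G) 1) => //.
    by move=> n; rewrite /K; case: (odd n).
  move=> w _; have [Cw|Cw] := boolp.pselect (eclass E x w).
    have [k _ Fk] := hF' w Cw; exists (k.*2.+1) => //.
    by rewrite /K /= odd_double /= uphalf_double.
  have [k _ Fk] := hF w Cw; exists (k.*2) => //.
  by rewrite /K odd_double doubleK.
have [U [[y [oO Oy]] OC]] := denseNE ndC.
have [e e0 he] := nbhs_ball cdG (open_nbhs_nbhs (conj oO Oy)).
apply: (Baire F y e) => // w /he Ow; apply: hF => Cw.
have : (U `&` eclass E x) w by [].
by rewrite OC.
Qed.
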